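(* Let $\epsilon>0$, $n\ge1$, and let $\phi:\{0,1,\dots,n\}\to(0,1)$. The following are equivalent: (1) There exists $m\in(0,1)$ such that $\phi_0=m$ and $\phi_x=\min\{e^\epsilon\phi_{x-1},\,1-e^{-\epsilon}(1-\phi_{x-1})\}$ for $x=1,\dots,n$. (2) There exists $m\in(0,1)$ such that $\phi_0=m$ and for $x=1,\dots,n$, $\phi_x=e^\epsilon\phi_{x-1}$ if $\phi_{x-1}\le\frac1{1+e^\epsilon}$ and $\phi_x=1-e^{-\epsilon}(1-\phi_{x-1})$ if $\phi_{x-1}>\frac1{1+e^\epsilon}$. (3) There exists $m\in\mathbb{R}$ such that $\phi_x=F_{N_0}(x-m)$ for $x=0,1,\dots,n$, where $N_0\sim\mathrm{Tulap}(0,b=e^{-\epsilon},0)$.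
   Context: Nearest integer function: $[t]$ is the integer nearest to $t$, with $[z+1/2]$ ($z\in\mathbb{Z}$) defined as the nearest even integer. For $b\in(0,1)$, $N_0\sim\mathrm{Tulap}(0,b,0)$ has cdf $F_{N_0}(x)=\frac{b^{-[x]}}{1+b}\big(b+(x-[x]+\tfrac12)(1-b)\big)$ for $x\le 0$ and $F_{N_0}(x)=1-\frac{b^{[x]}}{1+b}\big(b+([x]-x+\tfrac12)(1-b)\big)$ for $x>0$. *)

(* Defs.v *)
From Stdlib Require Import Reals ZArith.
Open Scope R_scope.

Definition Rfloor (t : R) : Z := (up t - 1)%Z.

(* Nearest integer [t], with ties z + 1/2 resolved to the nearest even integer. *)
Definition nearest_int (t : R) : Z :=
  let f := Rfloor (t + /2) in
  if Req_EM_T (IZR f) (t + /2) then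
    (if Z.odd f then (f - 1)%Z else f)
  else f.

(* CDF of N_0 ~ Tulap(0, b, 0), for b in (0,1). *)
Definition tulap_cdf (b x : R) : R :=
  let k := nearest_int x in
  if Rle_dec x 0 then
    powerRZ b (- k) / (1 + b) * (b + (x - IZR k + /2) * (1 - b))
  else
    1 - powerRZ b k / (1 + b) * (b + (IZR k - x + /2) * (1 - b)).

(* Main.v *)
Require Import Defs.
From Stdlib Require Import Reals ZArith Lra Lia.
Open Scope R_scope.
From Stdlib Require Import Lra Lia.

Definition Fk (b : R) (k : Z) (x : R) : R :=
  if Rle_dec x 0 then powerRZ b (- k) / (1 + b) * (b + (x - IZR k + /2) * (1 - b))
  else 1 - powerRZ b k / (1 + b) * (b + (IZR k - x + /2) * (1 - b)).

Lemma tulap_Fk b x : tulap_cdf b x = Fk b (nearest_int x) x.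
Proof. reflexivity. Qed.

Lemma nearest_bound x : IZR (nearest_int x) - /2 <= x <= IZR (nearest_int x) + /2.
Proof.
  unfold nearest_int, Rfloor.
  destruct (archimed (x + /2)) as [H1 H2].
  assert (E0 : IZR (up (x + /2) - 1) = IZR (up (x + /2)) - 1) by (rewrite minus_IZR; reflexivity).
  destruct Req_EM_T as [E|E].
  - destruct (Z.odd _).
    + rewrite minus_IZR. lra.
    + lra.
  - lra.
Qed.

Lemma Fk_tie b j : 0 < b -> Fk b j (IZR j + /2) = Fk b (j + 1) (IZR j + /2).
Proof.
  intros hb. unfold Fk. rewrite plus_IZR.
  destruct Rle_dec.
  - replace (- (j + 1))%Z with (- j + -1)%Z by ring.
    rewrite powerRZ_add by lra. simpl (powerRZ b (-1)). field. lra.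
  - rewrite powerRZ_add by lra. simpl (powerRZ b 1). field. lra.
Qed.

Lemma Fk_unique b k x : 0 < b -> IZR k - /2 <= x <= IZR k + /2 -> tulap_cdf b x = Fk b k x.
Proof.
  intros hb hk. rewrite tulap_Fk. pose proof (nearest_bound x) as hn.
  set (k0 := nearest_int x) in *.
  assert (h1 : (k - k0 < 2)%Z) by (apply lt_IZR; rewrite minus_IZR; lra).
  assert (h2 : (-2 < k - k0)%Z) by (apply lt_IZR; rewrite minus_IZR; lra).
  assert (k = k0 \/ k = (k0 + 1)%Z \/ k0 = (k + 1)%Z) as [->|[->|E]] by lia.
  - reflexivity.
  - rewrite plus_IZR in hk. replace x with (IZR k0 + /2) by lra. apply Fk_tie; auto.
  - rewrite E, plus_IZR in hn. replace x with (IZR k + /2) by lra. rewrite E.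
    symmetry; apply Fk_tie; auto.
Qed.

Lemma powZ_le1 b z : 0 < b < 1 -> (0 <= z)%Z -> 0 < powerRZ b z <= 1.
Proof.
  intros hb hz. rewrite <- (Z2Nat.id z hz), <- pow_powerRZ.
  destruct (Z.to_nat z) as [|n]. simpl; lra.
  pose proof (pow_lt_1_compat b (S n) ltac:(lra) ltac:(lia)).
  split; [apply pow_lt; lra | lra].
Qed.

Lemma powZ_leb b z : 0 < b < 1 -> (1 <= z)%Z -> 0 < powerRZ b z <= b.
Proof.
  intros hb hz. replace z with (1 + (z - 1))%Z by ring.
  rewrite powerRZ_add by lra. simpl (powerRZ b 1).
  pose proof (powZ_le1 b (z-1) hb ltac:(lia)). nra.
Qed.

Definition step (e p : R) : R :=
  if Rle_dec p (/ (1 + e)) then e * p else 1 - / e * (1 - p).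

Lemma step_F e y : 1 < e -> tulap_cdf (/ e) (y + 1) = step e (tulap_cdf (/ e) y).
Proof.
  intros he.
  assert (hb : 0 < / e < 1). { split. apply Rinv_0_lt_compat; lra.
    rewrite <- Rinv_1. apply Rinv_lt_contravar; lra. }
  assert (heb : e * / e = 1) by (field; lra).
  assert (hc : / (1 + e) = / e / (1 + / e)) by (field; lra).
  set (b := / e) in *.
  unfold step. rewrite hc.
  destruct (Rle_lt_dec y (-1)) as [H1|H1].
  - pose proof (nearest_bound y) as hn. set (k := nearest_int y) in *.
    assert (hk : (k < 0)%Z) by (apply lt_IZR; lra).
    rewrite (Fk_unique b k y) by lra.
    rewrite (Fk_unique b (k+1) (y+1)) by (try rewrite plus_IZR; lra).
    unfold Fk. rewrite plus_IZR.
    destruct (Rle_dec y 0); [|lra]. destruct (Rle_dec (y+1) 0); [|lra].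
    pose proof (powZ_leb b (-k) hb ltac:(lia)).
    destruct Rle_dec as [_|C].
    + replace (- (k + 1))%Z with (- k + -1)%Z by ring.
      rewrite powerRZ_add by lra. simpl (powerRZ b (-1)).
      unfold b; field. lra.
    + exfalso. apply C. unfold Rdiv.
      assert (0 < / (1+b)) by (apply Rinv_0_lt_compat; lra).
      assert (0 <= (b + (y - IZR k + / 2) * (1 - b)) <= 1) by nra.
      set (i := / (1+b)) in *. set (p := powerRZ b (-k)) in *.
      set (B := (b + (y - IZR k + / 2) * (1 - b))) in *.
      assert (p * B <= b) by nra. nra.
  - destruct (Rle_lt_dec y (-/2)) as [H2|H2].
    + rewrite (Fk_unique b (-1) y) by (simpl; lra).
      rewrite (Fk_unique b 0 (y+1)) by (simpl; lra).
      unfold Fk. destruct (Rle_dec y 0); [|lra]. destruct (Rle_dec (y+1) 0); [lra|].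
      simpl. destruct Rle_dec as [_|C].
      * unfold b; field; lra.
      * exfalso; apply C. 
        unfold Rdiv. assert (0 < / (1+b)) by (apply Rinv_0_lt_compat; lra).
        set (i := / (1+b)) in *. 
        assert (HB : b + (y - -1 + / 2) * (1 - b) <= 1) by nra.
        assert (b*i*(b + (y - -1 + / 2) * (1 - b)) <= b*i*1) by (apply Rmult_le_compat_l; nra).
        lra.
    + destruct (Rle_lt_dec y 0) as [H3|H3].
      * rewrite (Fk_unique b 0 y) by (simpl; lra).
        rewrite (Fk_unique b 1 (y+1)) by (simpl; lra).
        unfold Fk. destruct (Rle_dec y 0); [|lra]. destruct (Rle_dec (y+1) 0); [lra|].
        simpl. destruct Rle_dec as [C|_].
        -- exfalso. assert (0 < / (1+b)) by (apply Rinv_0_lt_compat; lra).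
           unfold Rdiv in C. set (i := / (1+b)) in *.
           assert (0 < (y - IZR 0 + /2) * (1-b)) by (apply Rmult_lt_0_compat; simpl; lra).
           assert (i * b < i * (b + (y - IZR 0 + / 2) * (1 - b))) by (apply Rmult_lt_compat_l; lra).
           simpl in *. lra.
        -- unfold b; field; lra.
      * pose proof (nearest_bound y) as hn. set (k := nearest_int y) in *.
        assert (hk : (-1 < k)%Z) by (apply lt_IZR; lra).
        rewrite (Fk_unique b k y) by lra.
        rewrite (Fk_unique b (k+1) (y+1)) by (try rewrite plus_IZR; lra).
        unfold Fk. rewrite plus_IZR.
        destruct (Rle_dec y 0); [lra|]. destruct (Rle_dec (y+1) 0); [lra|].
        assert (hi : 0 < / (1+b)) by (apply Rinv_0_lt_compat; lra).
        destruct Rle_dec as [C|_].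
        -- exfalso. unfold Rdiv in C.
           assert (HB : powerRZ b k * (b + (IZR k - y + / 2) * (1 - b)) < 1).
           { destruct (Z.eq_dec k 0) as [->|Hk].
             - simpl. nra.
             - pose proof (powZ_leb b k hb ltac:(lia)).
               set (B := b + (IZR k - y + / 2) * (1 - b)).
               assert (HB1 : B <= 1) by (unfold B; nra).
               assert (HB0 : 0 <= B) by (unfold B; nra).
               assert (powerRZ b k * B <= b * 1) by (apply Rmult_le_compat; lra).
               lra. }
           assert (HC : / (1 + b) * (powerRZ b k * (b + (IZR k - y + / 2) * (1 - b))) < / (1+b)) by nra.
           assert (b * / (1+b) = 1 - / (1+b)) by (field; lra). nra.
        -- rewrite powerRZ_add by lra. simpl (powerRZ b 1). unfold b; field; lra.
Qed.

Lemma c_facts e : 1 < e -> 0 < / (1+e) /\ (1+e) * / (1+e) = 1 /\ e * / e = 1 /\ 0 < / e.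
Proof. intros. repeat split; try (field; lra); apply Rinv_0_lt_compat; lra. Qed.

Lemma step_inj e u v : 1 < e -> step e u = step e v -> u = v.
Proof.
  intros he. destruct (c_facts e he) as (h1 & h2 & h3 & h4).
  set (c := / (1+e)) in *. set (ie := / e) in *.
  assert (hc : 1 - ie * (1 - c) = e * c) by nra.
  unfold step; fold c; fold ie.
  destruct (Rle_dec u c); destruct (Rle_dec v c); intros E.
  - nra.
  - exfalso. assert (e * u <= e * c) by nra. assert (ie * (1 - v) < ie * (1 - c)) by nra. lra.
  - exfalso. assert (e * v <= e * c) by nra. assert (ie * (1 - u) < ie * (1 - c)) by nra. lra.
  - nra.
Qed.

Lemma Rmin_step e p : 1 < e -> Rmin (e * p) (1 - / e * (1 - p)) = step e p.
Proof.
  intros he. destruct (c_facts e he) as (h1 & h2 & h3 & h4).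
  set (c := / (1+e)) in *. set (ie := / e) in *.
  unfold step, Rmin; fold c; fold ie.
  assert (key : e * (1 - ie * (1 - p)) - e * (e * p) = (e - 1) * (1 - (1+e) * p)).
  { replace (e * (1 - ie * (1 - p))) with (e - (e * ie) * (1 - p)) by ring. rewrite h3. ring. }
  destruct (Rle_dec (e*p) _); destruct (Rle_dec p c); auto.
  - exfalso. assert ((1+e)*p > (1+e)*c) by nra.
    assert (e * (e * p) <= e * (1 - ie * (1 - p))) by nra. nra.
  - exfalso. assert ((1+e)*p <= (1+e)*c) by nra.
    assert (e * (e * p) > e * (1 - ie * (1 - p))) by nra. nra.
Qed.

Lemma step_P2 e p q : 1 < e ->
  ((p <= / (1 + e) -> q = e * p) /\ (p > / (1 + e) -> q = 1 - / e * (1 - p))) <-> q = step e p.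
Proof.
  intros he. unfold step. destruct Rle_dec; split.
  - intros [A _]; auto.
  - intros ->; split; intros; auto; lra.
  - intros [_ A]; apply A; lra.
  - intros ->; split; intros; auto; lra.
Qed.

Lemma base_surj e p : 1 < e -> / (1+e) <= p <= 1 - / (1+e) -> exists y, tulap_cdf (/ e) y = p.
Proof.
  intros he hp. destruct (c_facts e he) as (h1 & h2 & h3 & h4).
  assert (hb : / e < 1) by (rewrite <- Rinv_1; apply Rinv_lt_contravar; lra).
  assert (hc : / (1 + e) = / e / (1 + / e)) by (field; lra).
  rewrite hc in hp. set (b := / e) in *.
  assert (hpb : b <= p * (1 + b) <= 1) .
  { destruct hp as [hp1 hp2]. unfold Rdiv in hp1, hp2.
    assert (E : (1+b) * / (1+b) = 1) by (field; lra).
    split; nra. }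
  set (y := (p - /2) * (1 + b) / (1 - b)).
  assert (hy : y * (1 - b) = (p - /2) * (1+b)) by (unfold y; field; lra).
  assert (hyb : - /2 <= y <= /2) by (split; nra).
  exists y. rewrite (Fk_unique b 0 y) by (simpl; lra).
  unfold Fk. simpl. destruct Rle_dec; unfold y; field; lra.
Qed.

Lemma surj_N e N : 1 < e -> forall p, 0 < p < 1 -> e ^ N * p >= / (1+e) ->
  e ^ N * (1 - p) >= / (1+e) -> exists y, tulap_cdf (/ e) y = p.
Proof.
  intros he. destruct (c_facts e he) as (h1 & h2 & h3 & h4).
  induction N as [|N IH]; intros p hp H1 H2.
  - simpl in *. apply base_surj; auto; lra.
  - simpl in H1, H2. assert (hN : 1 <= e ^ N) by (apply pow_R1_Rle; lra).
    set (c := / (1+e)) in *.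
    assert (hce : 1 - c = e * c) by nra.
    destruct (Rlt_le_dec p c) as [L|L].
    + destruct (IH (e * p)) as [y Hy].
      * split; nra.
      * nra.
      * assert (1 - e * p > c) by nra. nra.
      * exists (y - 1). apply (step_inj e); auto.
        rewrite <- step_F by lra. replace (y - 1 + 1) with y by ring. rewrite Hy.
        unfold step. fold c. destruct Rle_dec; lra.
    + destruct (Rle_lt_dec p (1 - c)) as [L2|L2].
      * apply base_surj; auto; fold c; lra.
      * destruct (IH (1 - e * (1 - p))) as [y Hy].
        -- split; nra.
        -- assert (1 - e * (1 - p) > c) by nra. nra.
        -- nra.
        -- exists (y + 1). rewrite step_F by lra. rewrite Hy.
           unfold step. fold c. destruct Rle_dec. nra.
           replace (/ e * (1 - (1 - e * (1 - p)))) with ((e * / e) * (1 - p)) by ring. nra.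
Qed.

Lemma surj e p : 1 < e -> 0 < p < 1 -> exists y, tulap_cdf (/ e) y = p.
Proof.
  intros he hp. destruct (c_facts e he) as (h1 & h2 & h3 & h4).
  set (c := / (1+e)) in *.
  destruct (Pow_x_infinity e ltac:(rewrite Rabs_right; lra) (c / p + c / (1 - p))) as [N HN].
  specialize (HN N (Nat.le_refl _)). rewrite Rabs_right in HN by (apply Rle_ge, pow_le; lra).
  assert (a1 : 0 < c / p) by (apply Rdiv_lt_0_compat; lra).
  assert (a2 : 0 < c / (1-p)) by (apply Rdiv_lt_0_compat; lra).
  apply (surj_N e N he p hp).
  - assert (c / p * p <= e ^ N * p) by (apply Rmult_le_compat_r; lra).
    assert (c / p * p = c) by (unfold c; field; split; apply Rgt_not_eq; [lra|exact (proj1 hp)]). fold c; lra.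
  - assert (c / (1-p) * (1-p) <= e ^ N * (1-p)) by (apply Rmult_le_compat_r; lra).
    assert (c / (1-p) * (1-p) = c) by (unfold c; field; split; apply Rgt_not_eq; [lra|]; destruct hp; lra). fold c; lra.
Qed.

Theorem lemma3 (eps : R) (n : nat) (phi : nat -> R)
  (heps : 0 < eps) (hn : (1 <= n)%nat)
  (hphi : forall x : nat, (x <= n)%nat -> 0 < phi x < 1) :
  let P1 := exists m : R, 0 < m < 1 /\ phi 0%nat = m /\
      forall x : nat, (1 <= x <= n)%nat ->
        phi x = Rmin (exp eps * phi (x - 1)%nat)
                     (1 - exp (- eps) * (1 - phi (x - 1)%nat)) in
  let P2 := exists m : R, 0 < m < 1 /\ phi 0%nat = m /\
      forall x : nat, (1 <= x <= n)%nat ->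
        (phi (x - 1)%nat <= / (1 + exp eps) -> phi x = exp eps * phi (x - 1)%nat) /\
        (phi (x - 1)%nat > / (1 + exp eps) ->
           phi x = 1 - exp (- eps) * (1 - phi (x - 1)%nat)) in
  let P3 := exists m : R,
      forall x : nat, (x <= n)%nat -> phi x = tulap_cdf (exp (- eps)) (INR x - m) in
  (P1 <-> P2) /\ (P2 <-> P3) /\ (P1 <-> P3).
Proof.
  cbv zeta. rewrite exp_Ropp.
  assert (he : 1 < exp eps) by (rewrite <- exp_0; apply exp_increasing; lra).
  set (e := exp eps) in *.
  set (Q := forall x : nat, (1 <= x <= n)%nat -> phi x = step e (phi (x - 1)%nat)).
  assert (h0 : 0 < phi 0%nat < 1) by (apply hphi; lia).
  assert (E1 : (exists m : R, 0 < m < 1 /\ phi 0%nat = m /\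
      forall x : nat, (1 <= x <= n)%nat ->
        phi x = Rmin (e * phi (x - 1)%nat) (1 - / e * (1 - phi (x - 1)%nat))) <-> Q).
  { split.
    - intros (m & _ & _ & H) x hx. rewrite H by auto. apply Rmin_step; auto.
    - intros H. exists (phi 0%nat). split; [auto|split; [auto|]].
      intros x hx. rewrite Rmin_step by auto. auto. }
  assert (E2 : (exists m : R, 0 < m < 1 /\ phi 0%nat = m /\
      forall x : nat, (1 <= x <= n)%nat ->
        (phi (x - 1)%nat <= / (1 + e) -> phi x = e * phi (x - 1)%nat) /\
        (phi (x - 1)%nat > / (1 + e) ->
           phi x = 1 - / e * (1 - phi (x - 1)%nat))) <-> Q).
  { split.
    - intros (m & _ & _ & H) x hx. apply step_P2; auto.
    - intros H. exists (phi 0%nat). split; [auto|split; [auto|]].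
      intros x hx. apply step_P2; auto. }
  assert (E3 : (exists m : R,
      forall x : nat, (x <= n)%nat -> phi x = tulap_cdf (/ e) (INR x - m)) <-> Q).
  { split.
    - intros (m & H) x hx. rewrite !H by lia.
      replace (INR x - m) with (INR (x - 1) - m + 1).
      + apply step_F; auto.
      + replace x with (S (x - 1)) at 2 by lia. rewrite S_INR. ring.
    - intros H. destruct (surj e (phi 0%nat) he h0) as [y Hy].
      exists (- y). induction x as [|x IH]; intros hx.
      + rewrite <- Hy. f_equal. simpl. ring.
      + rewrite H by lia. replace (S x - 1)%nat with x by lia.
        rewrite IH by lia. rewrite <- step_F by auto. f_equal. rewrite S_INR. ring. }
  rewrite E1, E2, E3. tauto.
Qed.
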